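(* Let $\mathcal Q$ be a complete orthomodular lattice and $V^{(\mathcal Q)}$ the $\mathcal Q$-valued universe. Let $[\![\cdot]\!]_{\mathcal Q}$ be a $\mathcal Q$-valued interpretation of the closed formulas of $NOM_{\mathcal Q}$ satisfying $[\![\phi\wedge\psi]\!]_{\mathcal Q}=[\![\phi]\!]_{\mathcal Q}\wedge[\![\psi]\!]_{\mathcal Q}$, $[\![\neg\phi]\!]_{\mathcal Q}=\neg[\![\phi]\!]_{\mathcal Q}$, $[\![\phi\rightarrow\psi]\!]_{\mathcal Q}=\neg[\![\phi]\!]_{\mathcal Q}\vee([\![\phi]\!]_{\mathcal Q}\wedge[\![\psi]\!]_{\mathcal Q})$ (Sasaki arrow), and $[\![(\forall x)\phi]\!]_{\mathcal Q}=\bigwedge_{u\in V^{(\mathcal Q)}}[\![\phi[x/u]]\!]_{\mathcal Q}$ (e.g., Takeuti's interpretation). For every closed formula $\phi$ of $NOM_{\mathcal Q}$, if $\vdash\phi$ is derivable in $NOM_{\mathcal Q}$, then $[\![\phi]\!]_{\mathcal Q}=\top$.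
   Context: A complete orthomodular lattice is a complete lattice with an order-reversing involution $\neg$ satisfying $a\wedge\neg a=\bot$, $a\vee\neg a=\top$, $a\le b\Rightarrow a\vee(\neg a\wedge b)=b$. $V^{(\mathcal Q)}$ is Takeuti's $\mathcal Q$-valued universe (defined as Boolean-valued models $V^{(\mathcal B)}$ with $\mathcal B$ replaced by $\mathcal Q$); the interpretation of atomic formulas $u=v$, $u\in v$ is a given element of $\mathcal Q$ and plays no role beyond the stated compositional clauses. The system $NOM_{\mathcal Q}$: formulas are first-order formulas with connectives $\wedge,\rightarrow,\neg$, quantifier $\forall$, relation symbols $=$ and $\in$, and constant symbols the elements of $V^{(\mathcal Q)}$ (no other function symbols); formulas differing only in names of bound variables are identified. Sequents $\phi_1,\ldots,\phi_n\vdash\psi$ have ordered finite antecedents. Rules, with $\Gamma$ a finite possibly empty sequence: (assumption) $\Gamma,\phi\vdash\phi$; (cut) $\Gamma\vdash\phi$, $\Gamma,\phi\vdash\psi$ $\Rightarrow$ $\Gamma\vdash\psi$; (paste) $\Gamma\vdash\phi$, $\Gamma\vdash\psi$ $\Rightarrow$ $\Gamma,\phi\vdash\psi$; (compatible exchange) $\Gamma,\phi,\psi\vdash\phi$, $\Gamma,\phi,\psi\vdash\chi$, $\Gamma,\psi,\phi\vdash\psi$ $\Rightarrow$ $\Gamma,\psi,\phi\vdash\chi$; ($\wedge$-intro) $\Gamma\vdash\phi$, $\Gamma\vdash\psi$ $\Rightarrow$ $\Gamma\vdash\phi\wedge\psi$; ($\wedge$-elim) $\Gamma\vdash\phi\wedge\psi$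 $\Rightarrow$ $\Gamma\vdash\phi$ and $\Rightarrow$ $\Gamma\vdash\psi$; ($\rightarrow$-intro) $\Gamma,\phi\vdash\psi$ $\Rightarrow$ $\Gamma\vdash\phi\rightarrow\psi$; ($\rightarrow$-elim) $\Gamma\vdash\phi\rightarrow\psi$ $\Rightarrow$ $\Gamma,\phi\vdash\psi$; (excluded middle) $\Gamma,\phi\vdash\psi$, $\Gamma,\neg\phi\vdash\psi$ $\Rightarrow$ $\Gamma\vdash\psi$; (explosion) $\Gamma\vdash\neg\phi$ $\Rightarrow$ $\Gamma,\phi\vdash\psi$; ($\forall$-intro) $\Gamma\vdash\phi$ $\Rightarrow$ $\Gamma\vdash(\forall x)\phi$, provided $x$ is not free in $\Gamma$; ($\forall$-elim) $\Gamma\vdash(\forall x)\phi$ $\Rightarrow$ $\Gamma\vdash\phi[x/t]$ for any term $t$. *)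

(* Defs.v *)
From Stdlib Require Import List Arith.
Import ListNotations.
Set Implicit Arguments.

(* A complete lattice presented by its order and arbitrary infima
   (meets of arbitrary subsets); binary meet/join, top and bottom are the
   derived lattice operations. *)
Record COML := {
  car :> Type;
  le : car -> car -> Prop;
  le_refl : forall a, le a a;
  le_trans : forall a b c, le a b -> le b c -> le a c;
  le_antisym : forall a b, le a b -> le b a -> a = b;
  inf : (car -> Prop) -> car;
  inf_lb : forall (S : car -> Prop) x, S x -> le (inf S) x;
  inf_glb : forall (S : car -> Prop) y, (forall x, S x -> le y x) -> le y (inf S);
  compl : car -> car;
  compl_invol : forall a, compl (compl a) = a;
  compl_antitone : forall a b, le a b -> le (compl b) (compl a);
  compl_meet : forall a, inf (fun x => x = a \/ x = compl a) = inf (fun _ => True);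
  compl_join : forall a,
      inf (fun x => le a x /\ le (compl a) x) = inf (fun _ => False);
  orthomodular : forall a b, le a b ->
      inf (fun x => le a x /\ le (inf (fun y => y = compl a \/ y = b)) x) = b
}.

Section LatOps.
Variable Q : COML.
Definition meet (a b : Q) : Q := inf Q (fun x => x = a \/ x = b).
Definition join (a b : Q) : Q := inf Q (fun x => le Q a x /\ le Q b x).
Definition top : Q := inf Q (fun _ => False).
Definition bot : Q := inf Q (fun _ => True).
Definition bigmeet (I : Type) (f : I -> Q) : Q := inf Q (fun x => exists i, x = f i).
End LatOps.

(** * Syntax of NOM_Q (de Bruijn indices; constants from V) *)
Inductive term (V : Type) : Type :=
| Var : nat -> term V
| Cst : V -> term V.
Arguments Var {V} _.
Arguments Cst {V} _.

Inductive form (V : Type) : Type :=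
| FEq : term V -> term V -> form V
| FIn : term V -> term V -> form V
| FAnd : form V -> form V -> form V
| FImp : form V -> form V -> form V
| FNeg : form V -> form V
| FAll : form V -> form V.
Arguments FEq {V} _ _.
Arguments FIn {V} _ _.
Arguments FAnd {V} _ _.
Arguments FImp {V} _ _.
Arguments FNeg {V} _.
Arguments FAll {V} _.

Section Syntax.
Variable V : Type.

Definition subst_term (s : nat -> term V) (t : term V) : term V :=
  match t with Var n => s n | Cst v => Cst v end.

Definition lift_term (t : term V) : term V :=
  subst_term (fun n => Var (S n)) t.

Definition up (s : nat -> term V) : nat -> term V :=
  fun n => match n with 0 => Var 0 | S m => lift_term (s m) end.

Fixpoint subst (s : nat -> term V) (f : form V) : form V :=
  match f with
  | FEq a b => FEq (subst_term s a) (subst_term s b)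
  | FIn a b => FIn (subst_term s a) (subst_term s b)
  | FAnd p q => FAnd (subst s p) (subst s q)
  | FImp p q => FImp (subst s p) (subst s q)
  | FNeg p => FNeg (subst s p)
  | FAll p => FAll (subst (up s) p)
  end.

Definition shift (f : form V) : form V := subst (fun n => Var (S n)) f.

Definition inst (f : form V) (t : term V) : form V :=
  subst (fun n => match n with 0 => t | S m => Var m end) f.

Definition closed_term (k : nat) (t : term V) : Prop :=
  match t with Var n => n < k | Cst _ => True end.

Fixpoint closedn (k : nat) (f : form V) : Prop :=
  match f with
  | FEq a b | FIn a b => closed_term k a /\ closed_term k b
  | FAnd p q | FImp p q => closedn k p /\ closedn k q
  | FNeg p => closedn k p
  | FAll p => closedn (S k) p
  end.

Definition closed (f : form V) : Prop := closedn 0 f.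

(** * The sequent calculus NOM_Q.  [Γ, φ] is [Γ ++ [φ]]. *)
Inductive derivable : list (form V) -> form V -> Prop :=
| d_assum : forall G p, derivable (G ++ [p]) p
| d_cut : forall G p q, derivable G p -> derivable (G ++ [p]) q -> derivable G q
| d_paste : forall G p q, derivable G p -> derivable G q -> derivable (G ++ [p]) q
| d_cexch : forall G p q r,
    derivable (G ++ [p; q]) p -> derivable (G ++ [p; q]) r ->
    derivable (G ++ [q; p]) q -> derivable (G ++ [q; p]) r
| d_andI : forall G p q, derivable G p -> derivable G q -> derivable G (FAnd p q)
| d_andEl : forall G p q, derivable G (FAnd p q) -> derivable G p
| d_andEr : forall G p q, derivable G (FAnd p q) -> derivable G q
| d_impI : forall G p q, derivable (G ++ [p]) q -> derivable G (FImp p q)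
| d_impE : forall G p q, derivable G (FImp p q) -> derivable (G ++ [p]) q
| d_em : forall G p q, derivable (G ++ [p]) q -> derivable (G ++ [FNeg p]) q ->
    derivable G q
| d_expl : forall G p q, derivable G (FNeg p) -> derivable (G ++ [p]) q
(* forall-intro: the variable (index 0) is not free in the shifted context *)
| d_allI : forall G p, derivable (map shift G) p -> derivable G (FAll p)
| d_allE : forall G p t, derivable G (FAll p) -> derivable G (inst p t).

End Syntax.

Definition sasaki_interp (Q : COML) (V : Type) (I : form V -> Q) : Prop :=
  (forall p q, closed p -> closed q -> I (FAnd p q) = meet Q (I p) (I q)) /\
  (forall p, closed p -> I (FNeg p) = compl Q (I p)) /\
  (forall p q, closed p -> closed q ->
     I (FImp p q) = join Q (compl Q (I p)) (meet Q (I p) (I q))) /\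
  (forall p, closed (FAll p) -> I (FAll p) = bigmeet Q (fun u : V => I (inst p (Cst u)))).

(* Main.v *)
Require Import Defs.
From Stdlib Require Import List Arith Lia.
Import ListNotations.

Lemma meet_lb1 (Q : COML) (a b : Q) : le Q (meet Q a b) a.
Proof. apply inf_lb; auto. Qed.
Lemma meet_lb2 (Q : COML) (a b : Q) : le Q (meet Q a b) b.
Proof. apply inf_lb; auto. Qed.
Lemma meet_glb (Q : COML) (a b c : Q) : le Q c a -> le Q c b -> le Q c (meet Q a b).
Proof. intros. apply inf_glb. intros x [->| ->]; auto. Qed.
Lemma join_ub1 (Q : COML) (a b : Q) : le Q a (join Q a b).
Proof. apply inf_glb. intros x [? ?]; auto. Qed.
Lemma join_ub2 (Q : COML) (a b : Q) : le Q b (join Q a b).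
Proof. apply inf_glb. intros x [? ?]; auto. Qed.
Lemma join_lub (Q : COML) (a b c : Q) : le Q a c -> le Q b c -> le Q (join Q a b) c.
Proof. intros. apply inf_lb; auto. Qed.
Lemma le_top (Q : COML) (x : Q) : le Q x (top Q).
Proof. apply inf_glb. intros _ []. Qed.
Lemma bot_le (Q : COML) (x : Q) : le Q (bot Q) x.
Proof. apply inf_lb; auto. Qed.
Lemma meet_compl (Q : COML) (a : Q) : meet Q a (compl Q a) = bot Q.
Proof. apply compl_meet. Qed.
Lemma oml (Q : COML) (a b : Q) : le Q a b -> join Q a (meet Q (compl Q a) b) = b.
Proof. apply orthomodular. Qed.
Lemma compl_le (Q : COML) (a b : Q) : le Q (compl Q a) (compl Q b) -> le Q b a.
Proof. intro H. apply compl_antitone in H. rewrite !compl_invol in H. exact H. Qed.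
Lemma compl_join_eq (Q : COML) (a b : Q) :
  compl Q (join Q a b) = meet Q (compl Q a) (compl Q b).
Proof.
  apply le_antisym.
  - apply meet_glb; apply compl_antitone; [apply join_ub1|apply join_ub2].
  - apply compl_le. rewrite compl_invol. apply join_lub; apply compl_le; rewrite compl_invol;
    [apply meet_lb1|apply meet_lb2].
Qed.
Lemma compl_meet_eq (Q : COML) (a b : Q) :
  compl Q (meet Q a b) = join Q (compl Q a) (compl Q b).
Proof.
  rewrite <- (compl_invol Q (join Q _ _)). rewrite compl_join_eq, !compl_invol. reflexivity.
Qed.
Lemma le_bot (Q : COML) (x : Q) : le Q x (bot Q) -> x = bot Q.
Proof. intro; apply le_antisym; auto using bot_le. Qed.
Lemma join_mono (Q : COML) (a b c d : Q) : le Q a c -> le Q b d -> le Q (join Q a b) (join Q c d).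
Proof. intros. apply join_lub. eapply le_trans; [eassumption|apply join_ub1].
  eapply le_trans; [eassumption|apply join_ub2]. Qed.
Lemma meet_mono (Q : COML) (a b c d : Q) : le Q a c -> le Q b d -> le Q (meet Q a b) (meet Q c d).
Proof. intros. apply meet_glb. eapply le_trans; [apply meet_lb1|eassumption].
  eapply le_trans; [apply meet_lb2|eassumption]. Qed.

Lemma omlR (Q : COML) (m y : Q) : le Q y m -> meet Q m (join Q (compl Q m) y) = y.
Proof.
  intro H. apply compl_antitone in H.
  pose proof (oml Q _ _ H) as E. rewrite compl_invol in E.
  apply (f_equal (compl Q)) in E. rewrite compl_join_eq, compl_meet_eq, !compl_invol in E.
  exact E.
Qed.

Definition sas (Q : COML) (a s : Q) : Q := meet Q a (join Q (compl Q a) s).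

Lemma sas_le (Q : COML) a s : le Q (sas Q a s) a.
Proof. apply meet_lb1. Qed.
Lemma sas_mono (Q : COML) a s t : le Q s t -> le Q (sas Q a s) (sas Q a t).
Proof. intro. apply meet_mono; [apply le_refl|apply join_mono; auto using le_refl]. Qed.
Lemma sasK (Q : COML) a s : join Q (compl Q a) (sas Q a s) = join Q (compl Q a) s.
Proof.
  unfold sas. pose proof (oml Q (compl Q a) (join Q (compl Q a) s) (join_ub1 _ _ _)) as E.
  rewrite compl_invol in E. exact E.
Qed.
Lemma sas_id (Q : COML) a s : le Q s a -> sas Q a s = s.
Proof. apply omlR. Qed.
Lemma sasP (Q : COML) m q x : le Q m q -> sas Q m (sas Q q x) = sas Q m x.
Proof.
  intro H. assert (Hc : le Q (compl Q q) (compl Q m)) by (apply compl_antitone; auto).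
  apply le_antisym; unfold sas at 1 3; apply meet_mono; try apply le_refl.
  - apply join_lub; [apply join_ub1|].
    eapply le_trans; [apply meet_lb2|]. apply join_mono; [exact Hc|apply le_refl].
  - change (meet Q q (join Q (compl Q q) x)) with (sas Q q x).
    apply join_lub; [apply join_ub1|].
    eapply le_trans; [apply (join_ub2 Q (compl Q q))|]. rewrite <- sasK.
    apply join_mono; [exact Hc|apply le_refl].
Qed.
Lemma sas_join_compl (Q : COML) a s : le Q s (join Q (compl Q a) (sas Q a s)).
Proof. rewrite sasK. apply join_ub2. Qed.

Lemma sas_imp (Q : COML) a b s :
  le Q s (join Q (compl Q a) (meet Q a b)) -> le Q (sas Q a s) b.
Proof.
  intro H. eapply le_trans; [|apply (meet_lb2 Q a b)].
  pose proof (omlR Q a (meet Q a b) (meet_lb1 _ _ _)) as E. rewrite <- E.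
  apply meet_mono. apply le_refl. apply join_lub. apply join_ub1. exact H.
Qed.

Lemma sas_em (Q : COML) p s :
  le Q s (join Q (sas Q p s) (sas Q (compl Q p) s)).
Proof.
  set (u := sas Q p s). set (v := sas Q (compl Q p) s).
  set (X := meet Q (join Q (compl Q p) u) (join Q p v)).
  set (w := join Q u v).
  assert (Hu : le Q u p) by apply sas_le.
  assert (Hv : le Q v (compl Q p)) by apply sas_le.
  assert (HsX : le Q s X).
  { apply meet_glb. apply sas_join_compl.
    pose proof (sas_join_compl Q (compl Q p) s) as H. rewrite compl_invol in H. exact H. }
  assert (HwX : le Q w X).
  { apply join_lub; apply meet_glb.
    - apply join_ub2.
    - eapply le_trans; [exact Hu|apply join_ub1].
    - eapply le_trans; [exact Hv|apply join_ub1].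
    - apply join_ub2. }
  assert (Hb : le Q (meet Q (compl Q u) (join Q (compl Q p) u)) (compl Q p)).
  { set (b := meet Q (compl Q u) (join Q (compl Q p) u)).
    assert (Hpb : le Q (compl Q p) b).
    { apply meet_glb. apply compl_antitone; auto. apply join_ub1. }
    pose proof (oml Q _ _ Hpb) as E. rewrite compl_invol in E.
    assert (Hz : meet Q p b = bot Q).
    { apply le_bot. eapply le_trans; [|apply le_refl].
      rewrite <- (meet_compl Q u). apply meet_glb.
      - rewrite <- (omlR Q p u Hu). apply meet_glb. apply meet_lb1.
        eapply le_trans; [apply meet_lb2|apply meet_lb2].
      - eapply le_trans; [apply meet_lb2|apply meet_lb1]. }
    rewrite Hz in E. rewrite <- E. apply join_lub. apply le_refl. apply bot_le. }
  assert (Hz : meet Q (compl Q w) X = bot Q).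
  { apply le_bot. unfold w. rewrite compl_join_eq.
    rewrite <- (meet_compl Q v). apply meet_glb.
    - rewrite <- (omlR Q (compl Q p) v Hv). rewrite compl_invol. apply meet_glb.
      + eapply le_trans; [|exact Hb]. apply meet_glb.
        eapply le_trans; [apply meet_lb1|apply meet_lb1].
        eapply le_trans; [apply meet_lb2|apply meet_lb1].
      + eapply le_trans; [apply meet_lb2|apply meet_lb2].
    - eapply le_trans; [apply meet_lb1|apply meet_lb2]. }
  pose proof (oml Q _ _ HwX) as E. rewrite Hz in E.
  eapply le_trans; [exact HsX|]. rewrite <- E. apply join_lub. apply le_refl. apply bot_le.
Qed.

Lemma sas_exch (Q : COML) p q r s :
  le Q (sas Q q (sas Q p s)) p -> le Q (sas Q q (sas Q p s)) r ->
  le Q (sas Q p (sas Q q s)) q -> le Q (sas Q p (sas Q q s)) r.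
Proof.
  intros H1 H2 H3. set (m := meet Q p q).
  assert (Hmp : le Q m p) by apply meet_lb1. assert (Hmq : le Q m q) by apply meet_lb2.
  assert (Ey : sas Q q (sas Q p s) = sas Q m s).
  { rewrite <- (sas_id Q m (sas Q q (sas Q p s))).
    rewrite sasP by auto. rewrite sasP by auto. reflexivity.
    apply meet_glb; auto. apply sas_le. }
  assert (Ez : sas Q p (sas Q q s) = sas Q m s).
  { rewrite <- (sas_id Q m (sas Q p (sas Q q s))).
    rewrite sasP by auto. rewrite sasP by auto. reflexivity.
    apply meet_glb; auto. apply sas_le. }
  rewrite Ez, <- Ey. exact H2.
Qed.

Lemma subst_ext (V : Type) (f : form V) : forall s t, (forall n, s n = t n) -> subst s f = subst t f.
Proof.
  induction f as [a b|a b|? ? ? ?|? ? ? ?|? ?|? ?]; intros s t H; simpl; try (f_equal; auto; fail).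
  - destruct a; destruct b; simpl; rewrite ?H; reflexivity.
  - destruct a; destruct b; simpl; rewrite ?H; reflexivity.
  - f_equal. apply IHf. intros [|n]; simpl; rewrite ?H; reflexivity.
Qed.

Lemma subst_comp (V : Type) (f : form V) : forall s t,
  subst s (subst t f) = subst (fun n => subst_term s (t n)) f.
Proof.
  induction f as [a b|a b|? ? ? ?|? ? ? ?|? ?|? ?]; intros s t0; simpl; try (f_equal; auto; fail).
  - destruct a; destruct b; reflexivity.
  - destruct a; destruct b; reflexivity.
  - f_equal. rewrite IHf. apply subst_ext. intros [|n]; simpl; [reflexivity|].
    destruct (t0 n); reflexivity.
Qed.

Lemma closed_subst (V : Type) (f : form V) : forall k s,
  (forall n, closed_term k (s n)) -> closedn k (subst s f).
Proof.
  induction f as [a b|a b|? ? ? ?|? ? ? ?|? ?|? ?]; intros k s H; simpl; auto.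
  - destruct a; destruct b; simpl; auto.
  - destruct a; destruct b; simpl; auto.
  - apply IHf. intros [|n]; simpl. lia. specialize (H n). destruct (s n); simpl in *; auto. lia.
Qed.

Lemma subst_closed_id (V : Type) (f : form V) : forall k s,
  closedn k f -> (forall n, n < k -> s n = Var n) -> subst s f = f.
Proof.
  induction f as [a b|a b|? ? ? ?|? ? ? ?|? ?|? ?]; intros k s Hc H; simpl in *; try (destruct Hc; f_equal; eauto; fail).
  - destruct Hc as [H1 H2]. destruct a; destruct b; simpl in *; rewrite ?H by auto; reflexivity.
  - destruct Hc as [H1 H2]. destruct a; destruct b; simpl in *; rewrite ?H by auto; reflexivity.
  - f_equal; eauto.
  - f_equal. apply (IHf (S k)); auto. intros [|n] Hn; simpl; auto. rewrite H by lia. reflexivity.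
Qed.

Definition sig {V : Type} (rho : nat -> V) : nat -> term V := fun n => Cst (rho n).
Definition val (Q : COML) {V : Type} (I : form V -> Q) (rho : nat -> V) (f : form V) : Q :=
  I (subst (sig rho) f).
Definition st (Q : COML) (V : Type) (I : form V -> Q) (rho : nat -> V) (G : list (form V)) : Q :=
  fold_left (fun s f => sas Q (val Q I rho f) s) G (top Q).

Lemma st_app1 (Q : COML) (V : Type) (I : form V -> Q) rho G p : st Q V I rho (G ++ [p]) = sas Q (val Q I rho p) (st Q V I rho G).
Proof. unfold st. rewrite fold_left_app. reflexivity. Qed.
Lemma st_app2 (Q : COML) (V : Type) (I : form V -> Q) rho G p q :
  st Q V I rho (G ++ [p; q]) = sas Q (val Q I rho q) (sas Q (val Q I rho p) (st Q V I rho G)).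
Proof. unfold st. rewrite fold_left_app. reflexivity. Qed.

Lemma closed_sig (V : Type) (rho : nat -> V) f : closed (subst (sig rho) f).
Proof. apply closed_subst. intros; simpl; auto. Qed.

Definition scons {V : Type} (u : V) (rho : nat -> V) : nat -> V :=
  fun n => match n with 0 => u | S m => rho m end.

Lemma val_shift (Q : COML) (V : Type) (I : form V -> Q) (u : V) rho f : val Q I (scons u rho) (shift f) = val Q I rho f.
Proof. unfold val, shift. rewrite subst_comp. reflexivity. Qed.

Lemma st_shift (Q : COML) (V : Type) (I : form V -> Q) (u : V) rho G : st Q V I (scons u rho) (map (@shift V) G) = st Q V I rho G.
Proof.
  unfold st. generalize (top Q). induction G; intro acc; simpl; auto.
  rewrite val_shift. apply IHG.
Qed.

Lemma inst_sig (V : Type) (rho : nat -> V) u p :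
  inst (subst (up (sig rho)) p) (Cst u) = subst (sig (scons u rho)) p.
Proof. unfold inst. rewrite subst_comp. apply subst_ext. intros [|n]; reflexivity. Qed.

Lemma val_all_le (Q : COML) (V : Type) (I : form V -> Q) (HI : sasaki_interp Q I) rho p u :
  le Q (val Q I rho (FAll p)) (val Q I (scons u rho) p).
Proof.
  destruct HI as (_ & _ & _ & H4). unfold val at 1. simpl.
  rewrite H4 by (apply (closed_sig V rho (FAll p))).
  apply inf_lb. exists u. rewrite inst_sig. reflexivity.
Qed.

Lemma val_all_glb (Q : COML) (V : Type) (I : form V -> Q) (HI : sasaki_interp Q I) rho p y :
  (forall u, le Q y (val Q I (scons u rho) p)) -> le Q y (val Q I rho (FAll p)).
Proof.
  intro H. destruct HI as (_ & _ & _ & H4). unfold val. simpl.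
  rewrite H4 by (apply (closed_sig V rho (FAll p))).
  apply inf_glb. intros x [u ->]. rewrite inst_sig. apply H.
Qed.

Lemma val_inst (Q : COML) (V : Type) (I : form V -> Q) (HI : sasaki_interp Q I) rho p t :
  le Q (val Q I rho (FAll p)) (val Q I rho (inst p t)).
Proof.
  set (u := match t with Var n => rho n | Cst v => v end).
  eapply le_trans. apply (val_all_le Q V I HI rho p u).
  unfold val, inst. rewrite subst_comp.
  match goal with |- le Q _ (I (subst ?s p)) => rewrite (subst_ext _ p s (sig (scons u rho))) end.
  apply le_refl. intros [|n]; unfold u; simpl; [destruct t|]; reflexivity.
Qed.

Lemma val_and (Q : COML) (V : Type) (I : form V -> Q) (HI : sasaki_interp Q I) rho p q :
  val Q I rho (FAnd p q) = meet Q (val Q I rho p) (val Q I rho q).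
Proof. destruct HI as (H & _). unfold val; simpl. apply H; apply closed_sig. Qed.
Lemma val_neg (Q : COML) (V : Type) (I : form V -> Q) (HI : sasaki_interp Q I) rho p :
  val Q I rho (FNeg p) = compl Q (val Q I rho p).
Proof. destruct HI as (_ & H & _). unfold val; simpl. apply H; apply closed_sig. Qed.
Lemma val_imp (Q : COML) (V : Type) (I : form V -> Q) (HI : sasaki_interp Q I) rho p q :
  val Q I rho (FImp p q) =
  join Q (compl Q (val Q I rho p)) (meet Q (val Q I rho p) (val Q I rho q)).
Proof. destruct HI as (_ & _ & H & _). unfold val; simpl. apply H; apply closed_sig. Qed.

Lemma soundness (Q : COML) (V : Type) (I : form V -> Q) (HI : sasaki_interp Q I) G p :
  derivable G p -> forall rho, le Q (st Q V I rho G) (val Q I rho p).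
Proof.
  induction 1; intro rho.
  - rewrite st_app1. apply sas_le.
  - specialize (IHderivable1 rho). specialize (IHderivable2 rho).
    rewrite st_app1, sas_id in IHderivable2; auto.
  - rewrite st_app1, sas_id; auto.
  - specialize (IHderivable1 rho). specialize (IHderivable2 rho). specialize (IHderivable3 rho).
    rewrite st_app2 in *. eapply sas_exch; eauto.
  - rewrite val_and; auto. apply meet_glb; auto.
  - eapply le_trans. apply IHderivable. rewrite val_and; auto. apply meet_lb1.
  - eapply le_trans. apply IHderivable. rewrite val_and; auto. apply meet_lb2.
  - specialize (IHderivable rho). rewrite st_app1 in IHderivable. rewrite val_imp; auto.
    eapply le_trans. apply (sas_join_compl Q (val Q I rho p)).
    apply join_mono. apply le_refl. apply meet_glb; auto. apply sas_le.
  - specialize (IHderivable rho). rewrite val_imp in IHderivable; auto. rewrite st_app1.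
    apply sas_imp; auto.
  - specialize (IHderivable1 rho). specialize (IHderivable2 rho).
    rewrite st_app1 in *. rewrite val_neg in IHderivable2; auto.
    eapply le_trans. apply (sas_em Q (val Q I rho p)). apply join_lub; auto.
  - rewrite st_app1. specialize (IHderivable rho). rewrite val_neg in IHderivable; auto.
    unfold sas. replace (join Q (compl Q (val Q I rho p)) (st Q V I rho G))
      with (compl Q (val Q I rho p)).
    rewrite meet_compl. apply bot_le.
    apply le_antisym. apply join_ub1. apply join_lub. apply le_refl. exact IHderivable.
  - apply val_all_glb; auto. intro u. rewrite <- (st_shift Q V I u). apply IHderivable.
  - eapply le_trans. apply IHderivable. apply val_inst; auto.
Qed.

Theorem corollary5p2 (Q : COML) (V : Type) (HV : inhabited V)
  (I : form V -> Q) (HI : @sasaki_interp Q V I) (phi : form V) :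
  closed phi -> derivable nil phi -> I phi = top Q.
Proof.
  intros Hc Hd. destruct HV as [v].
  pose proof (soundness Q V I HI _ _ Hd (fun _ => v)) as H.
  unfold st, val in H. simpl in H.
  rewrite (subst_closed_id V phi 0) in H; auto.
  apply le_antisym. apply le_top. exact H.
  intros; lia.
Qed.
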